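(* Let $\pi\colon E\to B$ and $\pi'\colon E'\to B'$ be Hurewicz fibrations with path-connected bases $B$ and $B'$. Let $f,g\colon E\to E'$ and $\bar f,\bar g\colon B\to B'$ be continuous maps with $\pi'\circ f=\bar f\circ\pi$ and $\pi'\circ g=\bar g\circ\pi$. Let $b_0\in B$ satisfy $\bar f(b_0)=b_0'=\bar g(b_0)$, let $F_0=\pi^{-1}(b_0)$, $F_0'=\pi'^{-1}(b_0')$, and let $f_0,g_0\colon F_0\to F_0'$ be the maps induced by $f$ and $g$. Then $$\mathrm{D}(f,g)+1\leq \big(\mathrm{D}(f_0,g_0)+1\big)\big(\mathrm{cat}(B)+1\big).$$
   Context: For continuous maps $f,g\colon X\to Y$, the homotopic distance $\mathrm{D}(f,g)$ is the least integer $n\geq 0$ such that there is an open cover $\{U_0,\dots,U_n\}$ of $X$ with $f|_{U_j}\simeq g|_{U_j}$ for all $j$ ($\infty$ if none exists). For a path-connected space $B$, $\mathrm{cat}(B)$ is the least integer $n\geq 0$ such that $B$ can be covered by $n+1$ open sets whose inclusions into $B$ are null-homotopic. *)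

(* Defs.v *)
From HB Require Import structures.
From mathcomp Require Import all_boot all_order all_algebra.
From mathcomp Require Import all_classical all_reals topology ereal.
From mathcomp Require Import Rstruct Rstruct_topology.
From Stdlib Require Import Rdefinitions.

Set Implicit Arguments.
Unset Strict Implicit.
Unset Printing Implicit Defensive.

Import Order.TTheory GRing.Theory Num.Theory.
Local Open Scope classical_set_scope.
Local Open Scope ring_scope.

Definition unitI : set R := `[0%R, 1%R].
Definition II := set_type unitI.

Lemma I0_mem : (0%R : R) \in unitI.
Proof. by apply/mem_set; rewrite /unitI /= in_itv /= lexx ler01. Qed.
Lemma I1_mem : (1%R : R) \in unitI.
Proof. by apply/mem_set; rewrite /unitI /= in_itv /= lexx ler01. Qed.
Definition I0 : II := exist _ 0%R I0_mem.
Definition I1 : II := exist _ 1%R I1_mem.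


Section Homotopy.

Definition homotopic {X Y : topologicalType} (f g : X -> Y) : Prop :=
  exists H : X * II -> Y,
    continuous H /\ (forall x, H (x, I0) = f x) /\ (forall x, H (x, I1) = g x).

Definition nullhomotopic {X Y : topologicalType} (h : X -> Y) : Prop :=
  exists y : Y, homotopic h (fun _ => y).

(* restriction of a map to a subset U of its domain; set_type U carries the
   subspace (initial) topology *)
Definition restr {X Y : Type} (U : set X) (f : X -> Y) : set_type U -> Y :=
  fun u => f (val u).
Arguments restr {X Y} U f u /.

Definition hdist_cover {X Y : topologicalType} (f g : X -> Y) (n : nat) : Prop :=
  exists U : nat -> set X,
    (forall j : nat, (j <= n)%nat -> open (U j)) /\
    (\bigcup_(j in [set j : nat | (j <= n)%nat]) U j = setT) /\
    (forall j : nat, (j <= n)%nat -> homotopic (restr (U j) f) (restr (U j) g)).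

Definition cat_cover (B : topologicalType) (n : nat) : Prop :=
  exists U : nat -> set B,
    (forall j : nat, (j <= n)%nat -> open (U j)) /\
    (\bigcup_(j in [set j : nat | (j <= n)%nat]) U j = setT) /\
    (forall j : nat, (j <= n)%nat -> nullhomotopic (restr (U j) id)).

Definition least_nat_ext (P : nat -> Prop) : \bar R :=
  match pselect (exists n, `[< P n >]) with
  | left h => ((ex_minn h)%:R)%:E
  | right _ => +oo%E
  end.

(* homotopic distance D(f,g) in N u {oo} (embedded in \bar R) *)
Definition hdist {X Y : topologicalType} (f g : X -> Y) : \bar R :=
  least_nat_ext (hdist_cover f g).

Definition LScat (B : topologicalType) : \bar R :=
  least_nat_ext (cat_cover B).

Definition path_connected (B : topologicalType) : Prop :=
  forall x y : B, exists p : II -> B,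
    continuous p /\ p I0 = x /\ p I1 = y.

Definition hurewicz_fibration {E B : topologicalType} (p : E -> B) : Prop :=
  continuous p /\
  forall (Z : topologicalType) (h : Z -> E) (H : Z * II -> B),
    continuous h -> continuous H -> (forall z, H (z, I0) = p (h z)) ->
    exists Ht : Z * II -> E,
      continuous Ht /\ (forall w, p (Ht w) = H w) /\
      (forall z, Ht (z, I0) = h z).

End Homotopy.

(* Main.v *)
Require Import Defs.
From mathcomp Require Import all_boot all_order all_algebra.
From mathcomp Require Import all_classical all_reals topology ereal.
From mathcomp Require Import Rstruct Rstruct_topology normedtype lra.
Notation R := Rdefinitions.R.
Set Implicit Arguments.
Unset Strict Implicit.
Unset Printing Implicit Defensive.
Import Order.TTheory GRing.Theory Num.Theory.
Local Open Scope classical_set_scope.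
Local Open Scope ring_scope.

Lemma cl_mem (x : R) : Num.max 0 (Num.min x 1) \in unitI.
Proof.
apply/mem_set; rewrite /unitI /= in_itv /=.
by rewrite le_max lexx /= ge_max ler01 ge_min lexx orbT.
Qed.
Definition cl (x : R) : II := @exist R (fun y => y \in unitI) _ (cl_mem x).

Lemma cl_cont : continuous cl.
Proof.
apply: (@continuous_comp_initial _ _ _ set_val).
have -> : (set_val \o cl) = (fun=> 0) \max (id \min (fun=> 1)).
  by apply: funext => x; rewrite /= set_valE.
move=> x; apply: normed_module.continuous_max; first exact: cst_continuous.
apply: normed_module.continuous_min; [by [] | exact: cst_continuous].
Qed.

Lemma cl_val (x : R) : 0 <= x <= 1 -> set_val (cl x) = x.
Proof.
case/andP=> x0 x1; rewrite set_valE /=.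
by rewrite (min_idPl x1) (max_idPr x0).
Qed.

Lemma II_inj (s t : II) : set_val s = set_val t -> s = t.
Proof. rewrite !set_valE; exact: val_inj. Qed.

Lemma valI_ge0 (t : II) : 0 <= set_val t <= 1.
Proof. by case: t => x /=; rewrite set_valE /= => /set_mem; rewrite /unitI /= in_itv. Qed.

Lemma cl0 : cl 0 = I0.
Proof. by apply: II_inj; rewrite cl_val ?lexx ?ler01. Qed.
Lemma cl1 : cl 1 = I1.
Proof. by apply: II_inj; rewrite cl_val ?lexx ?ler01. Qed.

Lemma fst_cont (A B : topologicalType) : continuous (@fst A B).
Proof. by move=> p; apply: cvg_fst. Qed.
Lemma snd_cont (A B : topologicalType) : continuous (@snd A B).
Proof. by move=> p; apply: cvg_snd. Qed.
Lemma cont_pair (A B C : topologicalType) (u : A -> B) (v : A -> C):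
  continuous u -> continuous v -> continuous (fun a => (u a, v a)).
Proof. move=> cu cv a; apply: cvg_pair; [exact: cu | exact: cv]. Qed.
Lemma ccomp (A B C : topologicalType) (u : A -> B) (v : B -> C) :
  continuous u -> continuous v -> continuous (v \o u).
Proof. by move=> cu cv x; apply: continuous_comp; [exact: cu|exact: cv]. Qed.
Lemma val_cont (X : topologicalType) (A : set X) : continuous (@set_val X A).
Proof. exact: initial_continuous. Qed.

Lemma contB (X : topologicalType) (u v : X -> R) :
  continuous u -> continuous v -> continuous (fun x => u x - v x).
Proof.
move=> cu cv x.
have := @continuousB _ R^o X u v x (cu x) (cv x).
exact.
Qed.
Lemma contD (X : topologicalType) (u v : X -> R) :
  continuous u -> continuous v -> continuous (fun x => u x + v x).
Proof.
move=> cu cv x.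
have := @continuousD _ R^o X u v x (cu x) (cv x).
exact.
Qed.

Lemma valsnd_cont (X : topologicalType) : continuous (fun p : X * II => set_val p.2).
Proof. exact: (@ccomp _ _ _ (@snd X II) (@set_val R unitI) (@snd_cont _ _) (@val_cont _ _)). Qed.

Lemma valI0 : set_val I0 = 0. Proof. by []. Qed.
Lemma valI1 : set_val I1 = 1. Proof. by []. Qed.

Lemma homotopic_sym (X Y : topologicalType) (f g : X -> Y) :
  homotopic f g -> homotopic g f.
Proof.
case=> H [cH [H0 H1]].
exists (fun p : X * II => H (p.1, cl (1 - set_val p.2))); split; last split.
- apply: (@ccomp _ _ _ (fun p : X * II => (p.1, cl (1 - set_val p.2))) H _ cH).
  apply: cont_pair; first exact: fst_cont.
  apply: (@ccomp _ _ _ (fun p : X * II => 1 - set_val p.2) cl _ cl_cont) => p.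
  apply: contB; first exact: cst_continuous.
  exact: valsnd_cont.
- by move=> x /=; rewrite valI0 subr0 cl1 H1.
- by move=> x /=; rewrite valI1 subrr cl0 H0.
Qed.

Lemma homotopic_trans (X Y : topologicalType) (f g h : X -> Y) :
  homotopic f g -> homotopic g h -> homotopic f h.
Proof.
case=> H1 [cH1 [H10 H11]] [H2 [cH2 [H20 H21]]].
pose s := fun p : X * II => set_val p.2 + set_val p.2.
have cs : continuous s by apply: contD; exact: valsnd_cont.
pose G1 := fun p : X * II => H1 (p.1, cl (s p)).
pose G2 := fun p : X * II => H2 (p.1, cl (s p - 1)).
have cG1 : continuous G1.
  apply: (@ccomp _ _ _ (fun p : X * II => (p.1, cl (s p))) H1 _ cH1).
  apply: cont_pair; first exact: fst_cont.
  exact: (@ccomp _ _ _ s cl cs cl_cont).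
have cG2 : continuous G2.
  apply: (@ccomp _ _ _ (fun p : X * II => (p.1, cl (s p - 1))) H2 _ cH2).
  apply: cont_pair; first exact: fst_cont.
  apply: (@ccomp _ _ _ (fun p => s p - 1) cl _ cl_cont).
  by apply: contB => //; exact: cst_continuous.
exists (fun p : X * II => if s p <= 1 then G1 p else G2 p); split; last split.
- pose A := s @^-1` [set x | x <= 1].
  pose B := s @^-1` [set x | 1 <= x].
  have cA : closed A by apply: preimage_closed; [move=> ? ?; exact: cs | exact: closed_le].
  have cB : closed B by apply: preimage_closed; [move=> ? ?; exact: cs | exact: closed_ge].
  apply/continuous_subspace_setT.
  have -> : [set: X * II] = A `|` B.
    apply/seteqP; split=> p _ //; rewrite /A /B /=.
    by case: (lerP (s p) 1) => hp; [left | right; apply: ltW].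
  apply: withinU_continuous => //.
  + apply: (@subspace_eq_continuous _ _ _ G1); last exact: continuous_subspaceT.
    by move=> p /set_mem; rewrite /A /= => hp; rewrite /from_subspace hp.
  + apply: (@subspace_eq_continuous _ _ _ G2); last exact: continuous_subspaceT.
    move=> p /set_mem; rewrite /B /= => hp; rewrite /from_subspace.
    case: ifPn => // hp2.
    have e : s p = 1 by apply/eqP; rewrite eq_le hp hp2.
    by rewrite /G1 /G2 e subrr cl1 cl0 H11 H20.
- move=> x /=; rewrite /s /= valI0 addr0 ler01 /G1 /= /s /= valI0 addr0 cl0.
  exact: H10.
- move=> x /=; rewrite /s /= valI1.
  have -> : (1 + 1 <= 1 :> R) = false by apply/negbTE; rewrite -ltNge; lra.
  rewrite /G2 /= /s /= valI1.
  have -> : (1 + 1 - 1 = 1 :> R) by lra.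
  by rewrite cl1 H21.
Qed.

Lemma sub_cont (Z X : topologicalType) (A : set X) (u : Z -> X)
  (hu : forall z, u z \in A) : continuous u ->
  continuous (fun z => (@exist X (fun x => x \in A) (u z) (hu z) : set_type A)).
Proof.
move=> cu; apply: (@continuous_comp_initial _ _ _ set_val).
by rewrite set_valE.
Qed.

Lemma open_image_sub (X : topologicalType) (A : set X) (V : set (set_type A)) :
  open A -> open V -> open (set_val @` V).
Proof.
move=> oA [O oO <-].
have -> : (@set_val X A) @` ((@set_val X A) @^-1` O) = O `&` A.
  apply/seteqP; split => x.
    by case=> z Oz <-; split => //; apply: set_valP.
  by case=> Ox Ax; exists (@exist X (fun x => x \in A) x (mem_set Ax)).
exact: openI.
Qed.

Lemma null_to_pt (B : topologicalType) (U : set B) (b0 : B) :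
  path_connected B -> nullhomotopic (@restr B B U id) ->
  homotopic (@restr B B U id) (fun _ => b0).
Proof.
move=> pc [y hy]; apply: (homotopic_trans hy).
have [p [cp [p0 p1]]] := pc y b0.
exists (fun q : set_type U * II => p q.2); split; last split.
- exact: (@ccomp _ _ _ snd p (@snd_cont _ _) cp).
- by move=> x /=; rewrite p0.
- by move=> x /=; rewrite p1.
Qed.

Lemma id_cont (X : topologicalType) : continuous (fun x : X => x).
Proof. by move=> x; apply: cvg_id. Qed.

Lemma cont_lift (X Z Y : topologicalType) (phi : X -> Z) (H : Z * II -> Y) :
  continuous phi -> continuous H -> continuous (fun q : X * II => H (phi q.1, q.2)).
Proof.
move=> cphi cH.
apply: (@ccomp _ _ _ (fun q : X * II => (phi q.1, q.2)) H _ cH).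
apply: cont_pair; last exact: snd_cont.
exact: (@ccomp _ _ _ fst phi (@fst_cont _ _) cphi).
Qed.

Lemma cont_at1 (Z Y : topologicalType) (H : Z * II -> Y) :
  continuous H -> continuous (fun z => H (z, I1)).
Proof.
move=> cH; apply: (@ccomp _ _ _ (fun z : Z => (z, I1)) H _ cH).
apply: cont_pair; [exact: id_cont | exact: cst_continuous].
Qed.

Lemma per_j (E B E' : topologicalType) (pi : E -> B)
  (hpi : hurewicz_fibration pi) (hB : path_connected B)
  (f g : E -> E') (hf : continuous f) (hg : continuous g)
  (b0 : B) (F' : set E')
  (f0 g0 : set_type (pi @^-1` [set b0]) -> set_type F')
  (hf0 : forall x, val (f0 x) = f (val x))
  (hg0 : forall x, val (g0 x) = g (val x))
  (n : nat) (V : nat -> set (set_type (pi @^-1` [set b0])))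
  (hVo : forall k, (k <= n)%N -> open (V k))
  (hVc : \bigcup_(k in [set k | (k <= n)%N]) V k = setT)
  (hVh : forall k, (k <= n)%N -> homotopic (@restr _ _ (V k) f0) (@restr _ _ (V k) g0))
  (U : set B) (hUo : open U) (hUn : nullhomotopic (@restr B B U id)) :
  exists W : nat -> set E,
    (forall k, (k <= n)%N -> open (W k) /\
        homotopic (@restr E E' (W k) f) (@restr E E' (W k) g)) /\
    (forall e, U (pi e) -> exists2 k, (k <= n)%N & W k e).
Proof.
have [K [cK [K0 K1]]] := null_to_pt b0 hB hUn.
have hi : forall z : set_type (pi @^-1` U), pi (val z) \in U.
  by move=> z; apply/mem_set; have := set_valP z.
pose iota : set_type (pi @^-1` U) -> set_type U := fun z => @exist B (fun x => x \in U) (pi (val z)) (hi z).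
have ci : continuous iota.
  apply: sub_cont.
  exact: (@ccomp _ _ _ set_val pi (@val_cont _ _) hpi.1).
pose Hz := fun w : set_type (pi @^-1` U) * II => K (iota w.1, w.2).
have cHz : continuous Hz by apply: cont_lift.
have Hz0 : forall z, Hz (z, I0) = pi (set_val z) by move=> z; rewrite /Hz K0.
have [Ht [cHt [pHt Ht0]]] := hpi.2 _ set_val Hz (@val_cont _ _) cHz Hz0.
have hr : forall z, Ht (z, I1) \in pi @^-1` [set b0].
  by move=> z; apply/mem_set; rewrite /preimage /= pHt /Hz K1.
pose r : set_type (pi @^-1` U) -> set_type (pi @^-1` [set b0]) := fun z => @exist E (fun x => x \in pi @^-1` [set b0]) (Ht (z, I1)) (hr z).
have cr : continuous r by apply: sub_cont; apply: cont_at1.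
have oZ : open (pi @^-1` U) by move/continuousP: (hpi.1) => /(_ _ hUo).
exists (fun k => set_val @` (r @^-1` V k)); split; last first.
  move=> e Ue.
  pose z : set_type (pi @^-1` U) := @exist E (fun x => x \in pi @^-1` U) e (mem_set Ue).
  have : [set: set_type (pi @^-1` [set b0])] (r z) by [].
  rewrite -hVc => -[k kn Vk]; exists k => //.
  by exists z.
move=> k kn; split.
  apply: open_image_sub => //.
  by move/continuousP: cr => /(_ _ (hVo k kn)).
pose W := set_val @` (r @^-1` V k).
have hphi : forall w : set_type W, val w \in pi @^-1` U.
  move=> w; have := set_valP w; case=> z _ <-.
  exact: valP.
pose phi : set_type W -> set_type (pi @^-1` U) :=
  fun w => @exist E (fun x => x \in pi @^-1` U) (val w) (hphi w).
have cphi : continuous phi by apply: sub_cont; exact: val_cont.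
have hpsi : forall w, r (phi w) \in V k.
  move=> w; apply/mem_set; have := set_valP w; case=> z Vz ez.
  suff -> : phi w = z by [].
  by apply: val_inj; rewrite /= -ez.
pose psi : set_type W -> set_type (V k) :=
  fun w => @exist _ (fun x => x \in V k) (r (phi w)) (hpsi w).
have cpsi : continuous psi.
  by apply: sub_cont; exact: (@ccomp _ _ _ phi r cphi cr).
have [KV [cKV [KV0 KV1]]] := hVh k kn.
apply: (@homotopic_trans _ _ _ (fun w => f (Ht (phi w, I1)))).
  exists (fun q => f (Ht (phi q.1, q.2))); split; last split.
  - exact: (@ccomp _ _ _ (fun q => Ht (phi q.1, q.2)) f (cont_lift cphi cHt) hf).
  - by move=> w /=; rewrite Ht0.
  - by [].
apply: (@homotopic_trans _ _ _ (fun w => g (Ht (phi w, I1)))); last first.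
  apply: homotopic_sym.
  exists (fun q => g (Ht (phi q.1, q.2))); split; last split.
  - exact: (@ccomp _ _ _ (fun q => Ht (phi q.1, q.2)) g (cont_lift cphi cHt) hg).
  - by move=> w /=; rewrite Ht0.
  - by [].
exists (fun q => val (KV (psi q.1, q.2))); split; last split.
- exact: (@ccomp _ _ _ (fun q => KV (psi q.1, q.2)) val (cont_lift cpsi cKV) (@val_cont _ _)).
- by move=> w /=; rewrite KV0 /= hf0.
- by move=> w /=; rewrite KV1 /= hg0.
Qed.

Lemma combine (E B E' : topologicalType) (pi : E -> B)
  (hpi : hurewicz_fibration pi) (hB : path_connected B)
  (f g : E -> E') (hf : continuous f) (hg : continuous g)
  (b0 : B) (F' : set E')
  (f0 g0 : set_type (pi @^-1` [set b0]) -> set_type F')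
  (hf0 : forall x, val (f0 x) = f (val x))
  (hg0 : forall x, val (g0 x) = g (val x)) (n m : nat) :
  hdist_cover f0 g0 n -> cat_cover B m ->
  hdist_cover f g (n.+1 * m.+1).-1.
Proof.
case=> V [hVo [hVc hVh]] [U [hUo [hUc hUn]]].
have : forall j, exists W : nat -> set E, (j <= m)%N ->
    (forall k, (k <= n)%N -> open (W k) /\
        homotopic (@restr E E' (W k) f) (@restr E E' (W k) g)) /\
    (forall e, U j (pi e) -> exists2 k, (k <= n)%N & W k e).
  move=> j; case: (leqP j m) => jm.
    have [W HW] := per_j hpi hB hf hg hf0 hg0 hVo hVc hVh (hUo j jm) (hUn j jm).
    by exists W.
  by exists (fun _ => set0).
case/choice => Wf hWf.
exists (fun i => Wf (i %/ n.+1)%N (i %% n.+1)%N); split; last split.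
- move=> i iN.
  have jm : (i %/ n.+1 <= m)%N.
    rewrite -ltnS ltn_divLR // mulnC.
    by move: iN; rewrite -subn1 leq_subRL ?muln_gt0 // add1n.
  have kn : (i %% n.+1 <= n)%N by rewrite -ltnS ltn_pmod.
  by case: (hWf _ jm) => /(_ _ kn) [].
- apply/seteqP; split => // e _.
  have : [set: B] (pi e) by [].
  rewrite -hUc => -[j jm Uj].
  have [k kn Wk] := (hWf j jm).2 e Uj.
  exists (j * n.+1 + k)%N.
    change (j * n.+1 + k <= (n.+1 * m.+1).-1)%N.
    have : (j * n.+1 + k < n.+1 * m.+1)%N.
      apply: (@leq_trans (j * n.+1 + n.+1)%N); first by rewrite ltn_add2l.
      by rewrite -mulSnr mulnC leq_mul2l ltnS (jm : (j <= m)%N) orbT.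
    by rewrite -subn1 leq_subRL ?muln_gt0 // add1n.
  rewrite divnMDl // modnMDl divn_small ?ltnS // addn0 modn_small ?ltnS //.
- move=> i iN.
  have jm : (i %/ n.+1 <= m)%N.
    rewrite -ltnS ltn_divLR // mulnC.
    by move: iN; rewrite -subn1 leq_subRL ?muln_gt0 // add1n.
  have kn : (i %% n.+1 <= n)%N by rewrite -ltnS ltn_pmod.
  by case: (hWf _ jm) => /(_ _ kn) [].
Qed.

Local Open Scope ereal_scope.

Lemma pos1 (x : \bar R) : (0 <= x)%E -> (0 < x + 1)%E.
Proof.
case: x => [r| |] //.
by rewrite lee_fin => r0; rewrite -EFinD lte_fin; lra.
Qed.

Lemma lne_ge0 (P : nat -> Prop) : (0 <= least_nat_ext P)%E.
Proof. by rewrite /least_nat_ext; case: pselect => // h; rewrite lee_fin. Qed.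

Theorem theorem6p1
  (E B E' B' : topologicalType) (pi : E -> B) (pi' : E' -> B')
  (hpi : hurewicz_fibration pi) (hpi' : hurewicz_fibration pi')
  (hB : path_connected B) (hB' : path_connected B')
  (f g : E -> E') (fb gb : B -> B')
  (hf : continuous f) (hg : continuous g)
  (hfb : continuous fb) (hgb : continuous gb)
  (hcf : forall e, pi' (f e) = fb (pi e))
  (hcg : forall e, pi' (g e) = gb (pi e))
  (b0 : B) (b0' : B') (hfb0 : fb b0 = b0') (hgb0 : gb b0 = b0')
  (f0 g0 : set_type (pi @^-1` [set b0]) -> set_type (pi' @^-1` [set b0']))
  (hf0 : forall x, val (f0 x) = f (val x))
  (hg0 : forall x, val (g0 x) = g (val x)) :
  hdist f g + 1 <= (hdist f0 g0 + 1) * (LScat B + 1).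
Proof.
have hc := @combine E B E' pi hpi hB f g hf hg b0 _ f0 g0 hf0 hg0.
have g1 := pos1 (lne_ge0 (cat_cover B)).
have g2 := pos1 (lne_ge0 (hdist_cover f0 g0)).
rewrite /hdist /LScat in g1 g2 *.
move: g1 g2; rewrite [least_nat_ext (hdist_cover f0 g0)]/least_nat_ext.
case: pselect => [h0|h0]; last first.
  by move=> g1 _; rewrite addye // gt0_mulye // leey.
rewrite [least_nat_ext (cat_cover B)]/least_nat_ext.
case: pselect => [h1|h1]; last first.
  by move=> _ g2; rewrite addye // gt0_muley // leey.
move=> _ _.
case: (ex_minnP h0) => n0 /asboolW Hn0 _.
case: (ex_minnP h1) => m0 /asboolW Hm0 _.
have Hc := hc n0 m0 Hn0 Hm0.
rewrite /least_nat_ext; case: pselect => [h2|h2]; last first.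
  by exfalso; apply: h2; exists (n0.+1 * m0.+1).-1%N; apply/asboolP.
case: (ex_minnP h2) => a _ /(_ _ (asboolT Hc)) ha.
have ha' : (a.+1 <= n0.+1 * m0.+1)%N.
  by move: ha; rewrite -subn1 leq_subRL ?muln_gt0 // add1n.
have e : forall k : nat, (k%:R + 1 = k.+1%:R :> R)%R by move=> k; rewrite mulrSr.
rewrite -!EFinD -EFinM lee_fin !e -natrM ler_nat.
exact: ha'.
Qed.
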